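(* Let $d\in\mathbb N\cup\{\infty\}$, $C>0$, and let ${\boldsymbol\gamma}$ be product weights. (1) If ${\boldsymbol\gamma}\in\mathcal S_{d,C}$, then $c:=\prod_{j\in[d]}(1+C^2\gamma_j)\in[1,\infty)$, the product weights ${\boldsymbol\eta}$ given by $\eta_u=C^{2|u|}\gamma_u$ lie in $\mathcal S_{d,C}$, and ${\boldsymbol\eta}\le T^\uparrow_{d,C}{\boldsymbol\gamma}\le c\,{\boldsymbol\eta}$. (2) If ${\boldsymbol\gamma}\in\mathcal M_d$, then with $c':=\prod_{j\in[d]}(1-\gamma_j)\in[0,1]$ and the product weights ${\boldsymbol\zeta}$ given by $\zeta_u=C^{-2|u|}\gamma_u$ we have $c'\,{\boldsymbol\zeta}\le T^\downarrow_{d,C}{\boldsymbol\gamma}\le{\boldsymbol\zeta}$. Furthermore ${\boldsymbol\zeta}\in\mathcal S_{d,C}$ iff ${\boldsymbol\gamma}\in\mathcal S_{d,C}$.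
   Context: Write $[d]=\{1,\dots,d\}$ if $d\in\mathbb N$ and $[d]=\mathbb N$ if $d=\infty$; $[s]=\{1,\dots,s\}$. $\mathcal U_d$ is the set of finite subsets of $[d]$; weights are families $(\gamma_u)_{u\in\mathcal U_d}$ of non-negative reals ($\mathcal W_d$), compared componentwise. Product weights: $\gamma_u=\prod_{j\in u}\gamma_j$, $\gamma_\emptyset=1$, for a non-increasing sequence $(\gamma_j)_{j\in[d]}$ of non-negative reals. $(\Delta_v{\boldsymbol\gamma})_u=\sum_{w\subseteq v}(-1)^{|w|}\gamma_{u\cup w}$; $\mathcal M_d$ is the set of weights with $\Delta_v{\boldsymbol\gamma}\ge\mathbf 0$ for all $v$. For $C>0$: $\mathcal S_{d,C}=\{{\boldsymbol\gamma}\in\mathcal W_d:\sum_vC^{2|v|}\gamma_v<\infty\}$; $(T^\uparrow_{d,C}{\boldsymbol\gamma})_u=\sum_{v\supseteq u}C^{2|v|}\gamma_v$ on $\mathcal S_{d,C}$; on $\mathcal M_d$, $(T^\downarrow_{d,C}{\boldsymbol\gamma})_u=C^{-2|u|}(\Delta_{[d]\setminus u}{\boldsymbol\gamma})_u$ if $d\in\mathbb N$ and $C^{-2|u|}\lim_{s\to\infty}(\Delta_{[s]\setminus u}{\boldsymbol\gamma})_u$ if $d=\infty$. Infinite products are understood as limits of partial products. *)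

(* Defs.v *)
From HB Require Import structures.
From mathcomp Require Import all_boot all_order all_algebra.
From mathcomp Require Import finmap.
From mathcomp Require Import all_classical all_reals all_analysis.
Set Implicit Arguments. Unset Strict Implicit. Unset Printing Implicit Defensive.
Import Order.TTheory GRing.Theory Num.Theory numFieldNormedType.Exports.
Local Open Scope classical_set_scope.
Local Open Scope ring_scope.

(* The dimension d ∈ ℕ ∪ {∞}:  Some n = n,  None = ∞. *)
Definition dimension := option nat.

Definition inD (d : dimension) (j : nat) : bool :=
  (1 <= j)%N && (if d is Some n then (j <= n)%N else true).

Definition inU (d : dimension) (u : {fset nat}) : Prop := forall j, j \in u -> inD d j.

Definition seg (s : nat) : {fset nat} := seq_fset tt (iota 1 s).

(* Weights: families indexed by finite subsets (only values on U_d matter). *)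
Definition weight (R : realType) := {fset nat} -> R.

Definition pweight (R : realType) (g : nat -> R) : weight R :=
  fun u => \prod_(j <- u) g j.

Definition prod_seq (R : realType) (d : dimension) (g : nat -> R) : Prop :=
  (forall j, inD d j -> 0 <= g j) /\
  (forall i j, inD d i -> inD d j -> (i <= j)%N -> g j <= g i).

Definition inS (R : realType) (d : dimension) (C : R) (gam : weight R) : Prop :=
  (\esum_(v in [set v | inU d v]) ((C ^+ (2 * #|` v|)) * gam v)%:E < +oo)%E.

Definition Tup (R : realType) (d : dimension) (C : R) (gam : weight R) : weight R :=
  fun u => fine (\esum_(v in [set v | inU d v /\ fsubset u v])
                   ((C ^+ (2 * #|` v|)) * gam v)%:E).

Definition Delta (R : realType) (gam : weight R) (v : {fset nat}) : weight R :=
  fun u => \sum_(w <- fpowerset v) (-1) ^+ #|` w| * gam (fsetU u w).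

Definition inM (R : realType) (d : dimension) (gam : weight R) : Prop :=
  forall v u, inU d v -> inU d u -> 0 <= Delta gam v u.

Definition Tdown (R : realType) (d : dimension) (C : R) (gam : weight R) : weight R :=
  fun u => C ^- (2 * #|` u|) *
    (match d with
     | Some n => Delta gam (fsetD (seg n) u) u
     | None => lim ((fun s : nat => Delta gam (fsetD (seg s) u) u) @ \oo)
     end).

(* partial products ∏_{j ∈ [d], j ≤ s} f j ; the product over [d] is their limit
   (eventually constant when d is finite) *)
Definition pprod (R : realType) (d : dimension) (f : nat -> R) (s : nat) : R :=
  \prod_(1 <= j < s.+1 | inD d j) f j.

(* Main.v *)
Require Import Defs.
From HB Require Import structures.
From mathcomp Require Import all_boot all_order all_algebra.
From mathcomp Require Import finmap.
Set Implicit Arguments. Unset Strict Implicit. Unset Printing Implicit Defensive.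
Import Order.TTheory GRing.Theory Num.Theory.

Section LSec.
Local Open Scope ring_scope.
Local Open Scope fset_scope.

Variable R : numDomainType.
Lemma expand (a b : nat -> R) (A : {fset nat}) :
  \sum_(w <- fpowerset A) (\prod_(j <- w) a j * \prod_(j <- A `\` w) b j)
  = \prod_(j <- A) (a j + b j).
Proof.
elim/fset1U_rect: A => [|x X xX IH].
  rewrite fpowerset0 big_seq_fset1 !big_seq_fset0 fsetDv big_seq_fset0 mulr1.
  by [].
rewrite big_fsetU1 // (big_fsetID _ (fun w : {fset nat} => x \in w)) /=.
have E1 : [fset w in fpowerset (x |` X) | x \in w] = [fset x |` w | w in fpowerset X].
  apply/fsetP => w; rewrite !inE /=; apply/andP/imfsetP => /=.
    case=> wsub xw; exists (w `\ x).
      rewrite ?fpowersetE; apply/fsubsetP => j; rewrite !inE => /andP[jx jw].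
      by move: (wsub); rewrite ?fpowersetE => /fsubsetP/(_ _ jw); rewrite !inE (negPf jx).
    by rewrite fsetD1K.
  case=> w' w'sub ->; split; last by rewrite fset1U1.
  rewrite ?fpowersetE; apply/fsubsetP => j; rewrite !inE => /orP[->//|jw].
  by rewrite ?fpowersetE in w'sub; rewrite (fsubsetP w'sub _ jw) orbT.
have E2 : [fset w in fpowerset (x |` X) | x \notin w] = fpowerset X.
  apply/fsetP => w; rewrite !inE /= !fpowersetE; apply/andP/idP.
    case=> /fsubsetP wsub xw; apply/fsubsetP => j jw.
    move: (wsub _ jw); rewrite !inE => /orP[/eqP ej|//].
    by rewrite -ej jw in xw.
  move=> /fsubsetP wsub; split; last by apply/negP => /wsub; rewrite (negPf xX).
  by apply/fsubsetP => j /wsub jX; rewrite !inE jX orbT.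
rewrite E1 E2 big_imfset /=; last first.
  move=> w1 w2; rewrite !fpowersetE => /fsubsetP s1 /fsubsetP s2 e.
  have n1 : x \notin w1 by apply/negP => /s1; rewrite (negPf xX).
  have n2 : x \notin w2 by apply/negP => /s2; rewrite (negPf xX).
  by rewrite -(fsetU1K n1) e fsetU1K.
set T := fun w : {fset nat} => \prod_(j <- w) a j * \prod_(j <- X `\` w) b j.
have sub_nx : forall w, w \in fpowerset X -> x \notin w.
  move=> w; rewrite fpowersetE => /fsubsetP ws; apply/negP => /ws; by rewrite (negPf xX).
have e1 : forall w, w \in fpowerset X ->
   \prod_(j <- x |` w) a j * \prod_(j <- (x |` X) `\` (x |` w)) b j = a x * T w.
  move=> w ww; rewrite big_fsetU1 ?sub_nx // -mulrA; congr (_ * (_ * _)).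
  apply: eq_fbigl => j; rewrite !inE; case: eqP => [->|_] /=; last by [].
  by rewrite (negPf xX) andbF.
have e2 : forall w, w \in fpowerset X ->
   \prod_(j <- w) a j * \prod_(j <- (x |` X) `\` w) b j = b x * T w.
  move=> w ww; rewrite [Z in _ * Z](@eq_fbigl _ _ _ _ _ (x |` (X `\` w))); last first.
    move=> j; rewrite !inE; case: eqP => [->|_] /=; last by [].
    by rewrite (sub_nx _ ww).
  rewrite big_fsetU1; last by rewrite !inE (negPf xX) andbF.
  by rewrite /T mulrCA.
rewrite big_seq [Z in (_ + Z)%R]big_seq.
rewrite (eq_bigr (fun w => a x * T w)); last by move=> w; apply: e1.
rewrite [Z in (_ + Z)%R](eq_bigr (fun w => b x * T w)); last by move=> w; apply: e2.
by rewrite -!big_seq -!big_distrr -mulrDl /= -IH.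
Qed.

Lemma prod_const_seq (r : seq nat) (c : R) : \prod_(j <- r) c = c ^+ size r.
Proof. by elim: r => [|x r IH]; rewrite ?big_nil ?big_cons ?IH ?exprS. Qed.

Lemma prod_disjU (u w : {fset nat}) (f : nat -> R) : [disjoint u & w] ->
  \prod_(j <- u `|` w) f j = \prod_(j <- u) f j * \prod_(j <- w) f j.
Proof.
move=> dis; rewrite -big_cat; apply: perm_big; apply: uniq_perm.
- exact: fset_uniq.
- rewrite cat_uniq !fset_uniq /= andbT; apply/hasPn => j jw /=.
  by apply/negP => ju; move/fdisjointP: dis => /(_ _ ju); rewrite jw.
- by move=> j; rewrite !inE mem_cat.
Qed.

Lemma ind_subset (A u v : {fset nat}) : u `<=` A ->
  \prod_(j <- A `\` v) ((j \notin u)%:R : R) = (u `<=` v)%:R.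
Proof.
move=> uA; case: (boolP (u `<=` v)) => uv.
  apply: big1_fset => j; rewrite !inE => /andP[jv jA] _.
  have -> // : j \notin u by apply/negP => ju; rewrite (fsubsetP uv _ ju) in jv.
have [j ju jv] : exists2 j, j \in u & j \notin v.
  move: uv => /fsubsetPn [j ju jv]; by exists j.
apply/eqP; rewrite prodf_seq_eq0; apply/hasP; exists j => /=.
  by rewrite !inE jv (fsubsetP uA _ ju).
by rewrite ju.
Qed.


Lemma sumsup (a : nat -> R) (A u : {fset nat}) : u `<=` A ->
  \sum_(v <- fpowerset A | u `<=` v) \prod_(j <- v) a j =
  \prod_(j <- u) a j * \prod_(j <- A `\` u) (1 + a j).
Proof.
move=> uA; rewrite big_mkcond /=.
rewrite (eq_bigr (fun v : {fset nat} => \prod_(j <- v) a j * \prod_(j <- A `\` v) ((j \notin u)%:R : R))); last first.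
  by move=> v _; rewrite ind_subset //; case: (u `<=` v); rewrite /= ?mulr1n ?mulr0n ?mulr1 ?mulr0.
rewrite expand (big_fsetID _ (fun j => j \in u)) /=; congr (_ * _).
  apply: eq_fbig => [j|j]; rewrite !inE /=.
    by case ju: (j \in u); rewrite ?andbF ?andbT ?(fsubsetP uA _ ju).
  by move=> /andP[_ ->]; rewrite /= addr0.
apply: eq_fbig => [j|j]; rewrite !inE /=; first by rewrite andbC.
by move=> /andP[_ ->]; rewrite addrC.
Qed.

Lemma sum0 (a : nat -> R) (A : {fset nat}) :
  \sum_(v <- fpowerset A) \prod_(j <- v) a j = \prod_(j <- A) (1 + a j).
Proof.
rewrite (eq_bigr (fun j => (a j + 1)%R)); last by move=> j _; rewrite addrC.
rewrite -expand; apply: eq_bigr => v _; by rewrite big1_eq mulr1.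
Qed.

Lemma delta_prod (g : nat -> R) (u v : {fset nat}) : [disjoint u & v] ->
  \sum_(w <- fpowerset v) (-1) ^+ #|` w| * \prod_(j <- u `|` w) g j =
  \prod_(j <- u) g j * \prod_(j <- v) (1 - g j).
Proof.
move=> dis.
rewrite (_ : \prod_(j <- v) (1 - g j) = \prod_(j <- v) (- g j + 1)%R); last first.
  by apply: eq_bigr => j _; rewrite addrC.
rewrite -(expand (fun j => - g j) (fun=> 1)) big_distrr /=; apply: eq_big_seq => w; rewrite fpowersetE => wv.
rewrite prod_disjU; last first.
  apply/fdisjointP => j ju; apply/negP => jw.
  by move/fdisjointP: dis => /(_ _ ju); rewrite (fsubsetP wv _ jw).
rewrite big1_eq mulr1 (_ : \prod_(j <- w) (- g j) = \prod_(j <- w) (-1 * g j)); last first.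
  by apply: eq_bigr => j _; rewrite mulN1r.
by rewrite big_split /= prod_const_seq mulrCA.
Qed.



End LSec.

From mathcomp Require Import all_classical all_reals all_analysis.
From mathcomp Require Import lra.
Import Order.TTheory GRing.Theory Num.Theory numFieldNormedType.Exports.
Local Open Scope classical_set_scope.
Local Open Scope ring_scope.

Definition E (d : dimension) (s : nat) : {fset nat} :=
  seq_fset tt [seq j <- iota 1 s | inD d j].

Lemma memE d s j : (j \in E d s) = inD d j && (j <= s)%N.
Proof.
rewrite seq_fsetE mem_filter mem_iota add1n ltnS.
by case/boolP: (inD d j) => //= /andP[->].
Qed.

Lemma E_mono d s t : (s <= t)%N -> (E d s `<=` E d t)%fset.
Proof.
move=> st; apply/fsubsetP => j; rewrite !memE => /andP[-> js] /=.
exact: leq_trans js st.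
Qed.

Lemma E_inU d s v : v \in fpowerset (E d s) -> inU d v.
Proof. by rewrite fpowersetE => /fsubsetP vE j /vE; rewrite memE => /andP[]. Qed.

Lemma pprodE (R : realType) d (f : nat -> R) s :
  pprod d f s = \prod_(j <- E d s) f j.
Proof.
rewrite /pprod -big_filter; apply: perm_big; apply: uniq_perm.
- by rewrite filter_uniq // iota_uniq.
- exact: fset_uniq.
by move=> j; rewrite mem_filter mem_index_iota memE /inD; case: d => [n|];
   case: (1 <= j)%N; rewrite ?andbF ?andbT //= ?ltnS // andbC.
Qed.

Lemma inU_bound d u : inU d u -> exists s0, (u `<=` E d s0)%fset.
Proof.
move=> uU; exists (\max_(j <- u) j); apply/fsubsetP => j ju.
rewrite memE uU //=; exact: leq_bigmax_seq.
Qed.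

Lemma cover d (X : set {fset nat}) s0 : finite_set X -> X `<=` [set v | inU d v] ->
  exists2 s, (s0 <= s)%N & forall v, X v -> (v `<=` E d s)%fset.
Proof.
move=> finX XU.
exists (maxn s0 (\max_(v <- fset_set X) \max_(j <- v) j)); first exact: leq_maxl.
move=> v Xv; apply/fsubsetP => j jv; rewrite memE (XU _ Xv) //=.
have vX : v \in fset_set X by rewrite in_fset_set // inE.
apply: leq_trans (leq_maxr _ _).
apply: (@leq_trans (\max_(j <- v) j)); first exact: leq_bigmax_seq.
exact: (@leq_bigmax_seq _ _ _ (fun v : {fset nat} => \max_(j <- v) j)).
Qed.


Lemma memfs (T : choiceType) (A : {fset T}) (P : pred T) v :
  (v \in [fset x in A | P x]%fset) = (v \in A) && P v.
Proof. by rewrite in_fset. Qed.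

Section K.
Variables (R : realType) (d : dimension).

Lemma K1 (D : set {fset nat}) (P : pred {fset nat}) (f : {fset nat} -> R) :
  (forall v, D v <-> inU d v /\ P v) ->
  (forall v, inU d v -> P v -> 0 <= f v) -> forall s,
  ((\sum_(v <- fpowerset (E d s) | P v) f v)%:E <= \esum_(v in D) (f v)%:E)%E.
Proof.
move=> DE f0 s; apply: esum_ge.
exists [set` [fset v in fpowerset (E d s) | P v]%fset].
  split; first exact: finite_fset.
  move=> v /=; rewrite !inE /= => /andP[vE Pv]; apply/DE; split => //.
  exact: E_inU vE.
by rewrite -fsbig_seq ?fset_uniq // -big_fset_condE sumEFin.
Qed.

Lemma K2 (D : set {fset nat}) (P : pred {fset nat}) (f : {fset nat} -> R) (M : R) s0 :
  (forall v, D v <-> inU d v /\ P v) ->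
  (forall v, inU d v -> P v -> 0 <= f v) ->
  (forall s, (s0 <= s)%N -> \sum_(v <- fpowerset (E d s) | P v) f v <= M) ->
  (\esum_(v in D) (f v)%:E <= M%:E)%E.
Proof.
move=> DE f0 HM; apply: ge_ereal_sup => _ [X [finX XD] <-].
have [s s0s Xs] := @cover d X s0 finX (fun v Xv => proj1 (proj1 (DE v) (XD v Xv))).
apply: (@le_trans _ _ (\sum_(v \in [set` [fset v in fpowerset (E d s) | P v]%fset]) (f v)%:E)%E).
  apply: lee_fsum_nneg_subset => //.
    move=> v; rewrite !inE /= => Xv; rewrite memfs fpowersetE Xs //=.
    by have [_ ] := proj1 (DE v) (XD v Xv).
  move=> v; rewrite !inE /= => /andP[_]; rewrite mem_setE memfs => /andP[vE Pv].
  rewrite lee_fin.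
  exact: f0 (E_inU vE) Pv.
by rewrite -fsbig_seq ?fset_uniq // -big_fset_condE sumEFin lee_fin HM.
Qed.

Lemma prod_split (A B : {fset nat}) (f : nat -> R) : (A `<=` B)%fset ->
  \prod_(j <- B) f j = \prod_(j <- A) f j * \prod_(j <- (B `\` A)%fset) f j.
Proof.
move=> AB; rewrite (big_fsetID _ (fun j => j \in A)) /=; congr (_ * _).
  apply: eq_fbigl => j; rewrite !inE /=.
  by case jA: (j \in A); rewrite ?andbF ?andbT ?(fsubsetP AB _ jA).
by apply: eq_fbigl => j; rewrite !inE /= andbC.
Qed.

Lemma prod_ge0 (A : {fset nat}) (f : nat -> R) :
  (forall j, j \in A -> 0 <= f j) -> 0 <= \prod_(j <- A) f j.
Proof. by move=> h; rewrite big_seq; apply: prodr_ge0. Qed.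

Lemma prod_ge1 (r : seq nat) (f : nat -> R) :
  (forall j, j \in r -> 1 <= f j) -> 1 <= \prod_(j <- r) f j.
Proof.
elim: r => [|x r IH] h; rewrite ?big_nil ?big_cons //.
apply: mulr_ege1; first by apply: h; rewrite inE eqxx.
by apply: IH => j jr; apply: h; rewrite inE jr orbT.
Qed.

End K.


Section B.
Variables (R : realType) (d : dimension).

Lemma Cpow (c : R) (v : {fset nat}) (g : nat -> R) :
  c ^+ (2 * #|` v|) * \prod_(j <- v) g j = \prod_(j <- v) (c ^+ 2 * g j).
Proof. by rewrite big_split /= prod_const_seq exprM. Qed.

Lemma bern (a : R) (K : nat) : 0 <= a -> 1 + K%:R * a <= (1 + a) ^+ K.
Proof.
move=> a0; elim: K => [|K IH]; first by rewrite mul0r addr0 expr0.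
rewrite exprSr -natr1 mulrDl mul1r.
have k0 : 0 <= K%:R :> R by [].
nra.
Qed.

Definition bnd (a : nat -> R) := exists M, forall s, \prod_(j <- E d s) (1 + a j) <= M.

Lemma prodU_ge0 (a : nat -> R) v : (forall j, inD d j -> 0 <= a j) -> inU d v ->
  0 <= \prod_(j <- v) a j.
Proof. by move=> a0 vU; apply: prod_ge0 => j /vU /a0. Qed.

Lemma fin_bnd (a : nat -> R) : (forall j, inD d j -> 0 <= a j) ->
  (\esum_(v in [set v | inU d v]) (\prod_(j <- v) a j)%:E < +oo)%E <-> bnd a.
Proof.
move=> a0.
have DE : forall v, [set v | inU d v] v <-> inU d v /\ xpredT v by move=> v; split => [h|[]].
have f0 : forall v, inU d v -> xpredT v -> 0 <= \prod_(j <- v) a j.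
  by move=> v vU _; apply: prodU_ge0.
split.
  move=> hlt.
  have S0 := @esum_ge0 R _ [set v | inU d v] (fun v => (\prod_(j <- v) a j)%:E)
      (fun v vU => prodU_ge0 a0 vU).
  have Sfin : (\esum_(v in [set v | inU d v]) (\prod_(j <- v) a j)%:E) \is a fin_num.
    by rewrite ge0_fin_numE.
  exists (fine (\esum_(v in [set v | inU d v]) (\prod_(j <- v) a j)%:E)) => s.
  have := K1 DE f0 s; rewrite -(fineK Sfin) lee_fin.
  by rewrite -sum0.
case=> M hM; apply: le_lt_trans (ltry M).
apply: (K2 (s0 := 0) DE f0) => s _.
by rewrite sum0.
Qed.

Lemma cmp_bnd (a b : nat -> R) (K : nat) : (forall j, inD d j -> 0 <= a j) ->
  (forall j, inD d j -> 0 <= b j) -> (forall j, inD d j -> b j <= K%:R * a j) ->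
  bnd a -> bnd b.
Proof.
move=> a0 b0 ba [M hM]; exists (M ^+ K) => s.
apply: (@le_trans _ _ (\prod_(j <- E d s) (1 + a j) ^+ K)).
  rewrite big_seq [X in _ <= X]big_seq; apply: ler_prod => j jE.
  have /andP[jd _] : inD d j && (j <= s)%N by rewrite -memE.
  rewrite addr_ge0 ?b0 //=; apply: le_trans (bern K (a0 _ jd)).
  by rewrite lerD2l ba.
rewrite prodrXl; apply: lerXn2r; rewrite ?nnegrE ?hM //.
  by apply: prod_ge0 => j; rewrite memE => /andP[jd _]; rewrite addr_ge0 ?a0.
apply: le_trans (hM s); apply: prod_ge0 => j; rewrite memE => /andP[jd _].
by rewrite addr_ge0 ?a0.
Qed.

Lemma nd_prod (a : nat -> R) : (forall j, inD d j -> 0 <= a j) ->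
  nondecreasing_seq (fun s => \prod_(j <- E d s) (1 + a j)).
Proof.
move=> a0 s t st; rewrite (prod_split _ (E_mono d st)); apply: ler_peMr.
  by apply: prod_ge0 => j; rewrite memE => /andP[jd _]; rewrite addr_ge0 ?a0.
apply: prod_ge1 => j jE; have : j \in (E d t `\` E d s)%fset := jE.
rewrite in_fsetD !memE => /andP[_ /andP[jd _]].
by rewrite lerDl a0.
Qed.

End B.


Lemma segE s j : (j \in seg s) = (1 <= j <= s)%N.
Proof. by rewrite /seg seq_fsetE mem_iota add1n ltnS. Qed.

Theorem part1 (R : realType) (d : dimension) (C : R) (g : nat -> R) :
  0 < C -> prod_seq d g ->
  (inS d C (pweight g) ->
    exists c : R,
      (pprod d (fun j => 1 + C ^+ 2 * g j) @ \oo --> c) /\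
      1 <= c /\
      inS d C (fun u => C ^+ (2 * #|` u|) * pweight g u) /\
      (forall u, inU d u ->
         C ^+ (2 * #|` u|) * pweight g u <= Tup d C (pweight g) u /\
         Tup d C (pweight g) u <= c * (C ^+ (2 * #|` u|) * pweight g u))).
Proof.
move=> C0 [g0 _].
have C2 : 0 < C ^+ 2 by rewrite exprn_gt0.
pose a := fun j => C ^+ 2 * g j.
have a0 : forall j, inD d j -> 0 <= a j by move=> j jd; rewrite /a mulr_ge0 ?g0 // ltW.
have eta_eq : forall u, C ^+ (2 * #|` u|) * pweight g u = \prod_(j <- u) a j.
  by move=> u; rewrite /pweight Cpow.
have [K hK] : exists K : nat, C ^+ 2 <= K%:R.
  by exists (Num.bound (C ^+ 2)); apply/ltW/archi_boundP/ltW.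
move=> hS.
have hS' : (\esum_(v in [set v | inU d v]) (\prod_(j <- v) a j)%:E < +oo)%E.
  move: hS; rewrite /inS (eq_esum (b := fun v : {fset nat} => (\prod_(j <- v) a j)%:E)) //.
  by move=> v _ /=; rewrite eta_eq.
have ba := (fin_bnd a0).1 hS'.
have [M hM] := ba.
pose u := fun s => \prod_(j <- E d s) (1 + a j).
have nd := nd_prod a0.
have cv : cvgn u.
  by apply: nondecreasing_is_cvgn nd _; exists M => _ [s _ <-]; exact: hM.
have ule : forall s, u s <= limn u := nondecreasing_cvgn_le nd cv.
have pu : pprod d (fun j => 1 + C ^+ 2 * g j) = u by apply/funext => s; rewrite pprodE.
exists (limn u); split; first by rewrite pu.
split.
  have u0 : u 0%N = 1.
    rewrite /u big1_fset // => j; rewrite memE => /andP[/andP[j1 _]].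
    by rewrite leqn0 => /eqP j0; rewrite j0 in j1.
  by rewrite -u0 ule.
split.
  pose b := fun j => C ^+ 2 * a j.
  have b0 : forall j, inD d j -> 0 <= b j by move=> j jd; rewrite /b mulr_ge0 ?a0 // ltW.
  have hb : bnd d b.
    apply: (cmp_bnd (K := K) a0 b0) => // j jd.
    by rewrite /b ler_wpM2r ?a0.
  have hh := (fin_bnd b0).2 hb.
  rewrite /inS (eq_esum (b := fun v : {fset nat} => (\prod_(j <- v) b j)%:E)) //.
  by move=> v _ /=; rewrite eta_eq Cpow.
move=> w wU.
rewrite /Tup (eq_esum (b := fun v : {fset nat} => (\prod_(j <- v) a j)%:E)); last first.
  by move=> v _; rewrite eta_eq.
have DE : forall v, [set v | inU d v /\ fsubset w v] v <-> inU d v /\ (fsubset w) v.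
  by move=> v.
have f0 : forall v, inU d v -> fsubset w v -> 0 <= \prod_(j <- v) a j.
  by move=> v vU _; exact: (prodU_ge0 a0 vU).
have [s0 hs0] := inU_bound wU.
have pw0 : 0 <= \prod_(j <- w) a j by exact: (prodU_ge0 a0 wU).
have up : (\esum_(v in [set v | inU d v /\ fsubset w v]) (\prod_(j <- v) a j)%:E
           <= (\prod_(j <- w) a j * limn u)%:E)%E.
  apply: (K2 (s0 := s0) DE f0) => s ss0.
  rewrite sumsup; last exact: fsubset_trans hs0 (E_mono d ss0).
  apply: ler_wpM2l => //; apply: le_trans (ule s).
  rewrite /u (prod_split _ (fsubsetDl (E d s) w)); apply: ler_peMr.
    by apply: prod_ge0 => j; rewrite in_fsetD memE => /andP[_ /andP[jd _]]; rewrite addr_ge0 ?a0.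
  apply: prod_ge1 => j jE; have : j \in (E d s `\` (E d s `\` w))%fset := jE.
  by rewrite in_fsetD !memE => /andP[_ /andP[jd _]]; rewrite lerDl a0.
have lo : ((\prod_(j <- w) a j)%:E <=
           \esum_(v in [set v | inU d v /\ fsubset w v]) (\prod_(j <- v) a j)%:E)%E.
  apply: le_trans (K1 DE f0 s0); rewrite lee_fin sumsup //; apply: ler_peMr => //.
  apply: prod_ge1 => j jE; have : j \in (E d s0 `\` w)%fset := jE.
  by rewrite in_fsetD !memE => /andP[_ /andP[jd _]]; rewrite lerDl a0.
have Sfin : (\esum_(v in [set v | inU d v /\ fsubset w v]) (\prod_(j <- v) a j)%:E)
              \is a fin_num.
  rewrite ge0_fin_numE; first exact: le_lt_trans up (ltry _).
  by apply: esum_ge0 => v [vU _]; rewrite lee_fin; exact: (prodU_ge0 a0 vU).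
rewrite eta_eq; split; rewrite -lee_fin fineK //.
by rewrite mulrC.
Qed.


Theorem part2 (R : realType) (d : dimension) (C : R) (g : nat -> R) :
  0 < C -> prod_seq d g ->
  (inM d (pweight g) ->
    (exists c' : R,
      (pprod d (fun j => 1 - g j) @ \oo --> c') /\
      0 <= c' <= 1 /\
      (forall u, inU d u ->
         c' * (C ^- (2 * #|` u|) * pweight g u) <= Tdown d C (pweight g) u /\
         Tdown d C (pweight g) u <= C ^- (2 * #|` u|) * pweight g u)) /\
    (inS d C (fun u => C ^- (2 * #|` u|) * pweight g u) <-> inS d C (pweight g))).
Proof.
move=> C0 [g0 _] hM.
have C2 : 0 < C ^+ 2 by rewrite exprn_gt0.
have g1 : forall j, inD d j -> g j <= 1.
  move=> j jd.
  have := hM [fset j]%fset fset0%fset.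
  rewrite /Delta /pweight delta_prod; last by apply/fdisjointP => i; rewrite inE.
  rewrite big_seq_fset0 big_seq_fset1 mul1r subr_ge0; apply.
    by move=> i; rewrite inE => /eqP ->.
  by move=> i; rewrite inE.
have h01 : forall j, inD d j -> 0 <= 1 - g j <= 1.
  by move=> j jd; rewrite subr_ge0 g1 //= lerBlDr lerDl g0.
have pr01 : forall A : {fset nat}, (forall j, j \in A -> inD d j) ->
    0 <= \prod_(j <- A) (1 - g j) <= 1.
  move=> A hA; apply/andP; split.
    by apply: prod_ge0 => j jA; case/andP: (h01 j (hA j jA)).
  by rewrite big_seq; apply: prodr_ile1 => j jA; exact: (h01 j (hA j jA)).
have pr0 : forall A : {fset nat}, (forall j, j \in A -> inD d j) ->
    0 <= \prod_(j <- A) (1 - g j) by move=> A h; case/andP: (pr01 A h).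
have pr1 : forall A : {fset nat}, (forall j, j \in A -> inD d j) ->
    \prod_(j <- A) (1 - g j) <= 1 by move=> A h; case/andP: (pr01 A h).
pose u := fun s => \prod_(j <- E d s) (1 - g j).
have inE_D : forall s j, j \in E d s -> inD d j by move=> s j; rewrite memE => /andP[].
have ni : nonincreasing_seq u.
  move=> s t st; rewrite /u (prod_split _ (E_mono d st)); apply: ler_piMr.
    exact: pr0 (inE_D s).
  apply: pr1 => j; rewrite in_fsetD => /andP[_ /inE_D] //.
have lb : forall s, 0 <= u s by move=> s; exact: pr0 (inE_D s).
have cv : cvgn u by apply: nonincreasing_is_cvgn ni _; exists 0 => _ [s _ <-]; exact: lb.
have ge := nonincreasing_cvgn_ge ni cv.
have c0 : 0 <= limn u by apply: limr_ge cv _; apply: nearW => s; exact: lb.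
have u0 : u 0%N = 1.
  rewrite /u big1_fset // => j; rewrite memE => /andP[/andP[j1 _]].
  by rewrite leqn0 => /eqP j0; rewrite j0 in j1.
have c1 : limn u <= 1 by rewrite -u0 ge.
have key : forall (w : {fset nat}) s, limn u <= \prod_(j <- (E d s `\` w)%fset) (1 - g j).
  move=> w s; apply: (@le_trans _ _ (u s)); first exact: ge.
  rewrite /u (prod_split _ (fsubsetDl (E d s) w)).
  apply: ler_piMr; first by apply: pr0 => j; rewrite in_fsetD => /andP[_ /inE_D].
  by apply: pr1 => j; rewrite in_fsetD => /andP[_ /inE_D].
split.
  exists (limn u); split; first by rewrite (_ : pprod d _ = u) //; apply/funext => s; rewrite pprodE.
  split; first by rewrite c0 c1.
  move=> w wU.
  have pw0 : 0 <= pweight g w by exact: (prodU_ge0 g0 wU).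
  have k0 : 0 <= C ^- (2 * #|` w|) by rewrite invr_ge0 exprn_ge0 // ltW.
  have dis : forall A : {fset nat}, [disjoint w & (A `\` w)%fset]%fset.
    by move=> A; apply/fdisjointP => j jw; rewrite in_fsetD jw.
  rewrite /Tdown mulrCA; destruct d as [n|].
    rewrite /Delta delta_prod // -/(pweight g w).
    have segD : forall j, j \in (seg n `\` w)%fset -> inD (Some n) j.
      by move=> j; rewrite in_fsetD segE => /andP[_ /andP[j1 jn]]; rewrite /inD j1 jn.
    split; apply: (ler_wpM2l k0).
      rewrite mulrC; apply: (ler_wpM2l pw0); apply: (@le_trans _ _ (\prod_(j <- (E (Some n) n `\` w)%fset) (1 - g j))); first exact: key.
      rewrite le_eqVlt; apply/orP; left; apply/eqP; apply: eq_fbigl => j.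
      by rewrite !in_fsetD memE segE /inD -andbA andbb.
    by apply: (ler_piMr pw0); apply: pr1 segD.
  have segD : forall s j, j \in (seg s `\` w)%fset -> inD None j.
    by move=> s j; rewrite in_fsetD segE => /andP[_ /andP[j1 jn]]; rewrite /inD j1.
  pose v := fun s => pweight g w * \prod_(j <- (seg s `\` w)%fset) (1 - g j).
  have -> : (fun s => Delta (pweight g) (seg s `\` w)%fset w) = v.
    by apply/funext => s; rewrite /Delta delta_prod.
  have segm : forall s t, (s <= t)%N -> (seg s `\` w `<=` seg t `\` w)%fset.
    move=> s t st; apply/fsubsetP => j; rewrite !in_fsetD !segE => /andP[-> /andP[-> js]] /=.
    exact: leq_trans js st.
  have niv : nonincreasing_seq v.
    move=> s t st; rewrite /v; apply: (ler_wpM2l pw0).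
    rewrite (prod_split _ (segm _ _ st)); apply: ler_piMr.
      exact: pr0 (segD s).
    by apply: pr1 => j; rewrite in_fsetD => /andP[_ /segD].
  have lbv : forall s, 0 <= v s.
    by move=> s; rewrite /v mulr_ge0 //; exact: pr0 (segD s).
  have cvv : cvgn v.
    by apply: nonincreasing_is_cvgn niv _; exists 0 => _ [s _ <-]; exact: lbv.
  split; apply: (ler_wpM2l k0).
    apply: limr_ge cvv _; apply: nearW => s; rewrite /v mulrC; apply: (ler_wpM2l pw0).
    apply: (@le_trans _ _ (\prod_(j <- (E None s `\` w)%fset) (1 - g j))); first exact: key.
     rewrite le_eqVlt; apply/orP; left; apply/eqP.
    by apply: eq_fbigl => j; rewrite !in_fsetD memE segE /inD andbT.
  apply: limr_le cvv _; apply: nearW => s; rewrite /v.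
  by apply: (ler_piMr pw0); exact: pr1 (segD s).
pose a := fun j => C ^+ 2 * g j.
have a0 : forall j, inD d j -> 0 <= a j by move=> j jd; rewrite /a mulr_ge0 ?g0 // ltW.
have [K hK] : exists K : nat, C ^+ 2 <= K%:R.
  by exists (Num.bound (C ^+ 2)); apply/ltW/archi_boundP/ltW.
have [K' hK'] : exists K : nat, (C ^+ 2)^-1 <= K%:R.
  by exists (Num.bound (C ^+ 2)^-1); apply/ltW/archi_boundP; rewrite invr_ge0 ltW.
have Ez : forall v : {fset nat}, C ^+ (2 * #|` v|) * (C ^- (2 * #|` v|) * pweight g v)
   = \prod_(j <- v) g j.
  by move=> v; rewrite mulVKf // expf_neq0 // lt0r_neq0.
have Eg : forall v : {fset nat}, C ^+ (2 * #|` v|) * pweight g v = \prod_(j <- v) a j.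
  by move=> v; rewrite /pweight Cpow.
rewrite /inS.
have -> : (\esum_(v in [set v | inU d v]) ((C ^+ (2 * #|` v|)) * pweight g v)%:E)%E =
   (\esum_(v in [set v | inU d v]) (\prod_(j <- v) a j)%:E)%E.
  by apply: eq_esum => v _; rewrite Eg.
rewrite (eq_esum (b := fun v : {fset nat} => (\prod_(j <- v) g j)%:E)); last first.
  by move=> v _ /=; rewrite Ez.
rewrite (fin_bnd g0) (fin_bnd a0); split.
  apply: (cmp_bnd (K := K) g0 a0) => j jd.
  by rewrite /a ler_wpM2r ?g0.
apply: (cmp_bnd (K := K') a0 g0) => j jd.
rewrite /a mulrA; apply: (@le_trans _ _ ((C ^+ 2)^-1 * C ^+ 2 * g j)).
  by rewrite mulVf ?mul1r // lt0r_neq0.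
apply: (ler_wpM2r (g0 _ jd)); exact: (ler_wpM2r (ltW C2)).
Qed.


Unset Implicit Arguments.
Theorem mainTheorem8 (R : realType) (d : dimension) (C : R) (g : nat -> R) :
  0 < C -> prod_seq d g ->
  (* (1) *)
  (inS d C (pweight g) ->
    exists c : R,
      (pprod d (fun j => 1 + C ^+ 2 * g j) @ \oo --> c) /\
      1 <= c /\
      inS d C (fun u => C ^+ (2 * #|` u|) * pweight g u) /\
      (forall u, inU d u ->
         C ^+ (2 * #|` u|) * pweight g u <= Tup d C (pweight g) u /\
         Tup d C (pweight g) u <= c * (C ^+ (2 * #|` u|) * pweight g u)))
  /\
  (* (2) *)
  (inM d (pweight g) ->
    (exists c' : R,
      (pprod d (fun j => 1 - g j) @ \oo --> c') /\
      0 <= c' <= 1 /\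
      (forall u, inU d u ->
         c' * (C ^- (2 * #|` u|) * pweight g u) <= Tdown d C (pweight g) u /\
         Tdown d C (pweight g) u <= C ^- (2 * #|` u|) * pweight g u)) /\
    (inS d C (fun u => C ^- (2 * #|` u|) * pweight g u) <-> inS d C (pweight g))).
Proof.
move=> C0 hg; split; [exact: part1 C0 hg | exact: part2 C0 hg].
Qed.
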